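(* Consider the stochastic Hydra game described below. From any hydra $H$ with root node $r$ satisfying $T(r)\ge\omega$ (and any current regrowth capacity), one can reach, in one round and with non-zero probabilities, an infinite sequence of hydras $H_1,H_2,\ldots$ with roots $r_1,r_2,\ldots$ such that the smallest ordinal larger than all of $T(r_1),T(r_2),\ldots$ is $T(r)$.
   Context: A hydra is a finite rooted tree; a head is a leaf (together with the edge to its parent). Ordinal mapping: for a hydra, define $T$ on its nodes by $T(v)=0$ for a leaf $v$, and for an internal node $v$ with children $v_1,\ldots,v_m$, $T(v)$ is the natural (Hessenberg) sum $\omega^{T(v_1)}\#\cdots\#\omega^{T(v_m)}$; values lie below $\varepsilon_0$. The game maintains a positive integer regrowth capacity $N$ (initially $4$). A round from hydra $H$: if $H$ is empty the game ends; otherwise Hercules chooses a leaf $l$; let $p$ be its parent and $g$ its grandparent (if it exists), and remove $l$. If $g$ exists, the Hydra nondeterministically repeatedly chooses whether to evolve: each evolution attempt ends the game (the Hydra dies) with probability $1/2$ and otherwise multiplies $N$ by $4$; thus after choosing exactly $m$ evolutions the game continues with probability $2^{-m}$ and capacity $N\cdot4^m$. Then, with $N'$ the current capacity, $N'-1$ copies of the (remaining) subtree rooted at $p$ are grown as new children of $g$. If $g$ does not exist, nothing grows. ''Reach in one round with non-zero probability'' means: for some choice of Hercules' leaf and the Hydra's nondeterministic choices, the resulting hydra occurs at the end of the round with positive probability. *)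

(* Defs.v *)
From mathcomp Require Import all_boot all_order all_algebra.
Set Implicit Arguments. Unset Strict Implicit. Unset Printing Implicit Defensive.
Import Order.TTheory GRing.Theory Num.Theory.

(* A hydra is represented by its root node; a node is the (finite) list of
   its children.  The order of children is irrelevant for everything below
   (the ordinal T is invariant under reordering). *)
Inductive hydra := Node of seq hydra.

Definition leaf : hydra := Node [::].
Definition is_leaf (h : hydra) : bool := if h is Node [::] then true else false.

Definition rem_at {A : Type} (i : nat) (s : seq A) : seq A := take i s ++ drop i.+1 s.

(* [chop k path H]: Hercules cuts the head (leaf) reached from the root by
   following the child indices [path].  If the parent p of the leaf is the
   root (path of length 1), nothing grows.  Otherwise (path of length >= 2),
   with g the grandparent, k copies of the remaining subtree rooted at p are
   added as new children of g. *)
Fixpoint chop (k : nat) (path : seq nat) (H : hydra) : option hydra :=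
  let: Node cs := H in
  match path with
  | [::] => None
  | [:: i] =>
      if (i < size cs) && is_leaf (nth leaf cs i)
      then Some (Node (rem_at i cs)) else None
  | [:: i; j] =>
      let: Node ds := nth leaf cs i in
      if (i < size cs) && (j < size ds) && is_leaf (nth leaf ds j)
      then let p' := Node (rem_at j ds) in
           Some (Node (set_nth leaf cs i p' ++ nseq k p'))
      else None
  | i :: rest =>
      if i < size cs then
        match chop k rest (nth leaf cs i) with
        | Some c' => Some (Node (set_nth leaf cs i c'))
        | None => None
        end
      else None
  end.

(* Probability that the round, with Hercules cutting along [path] and the
   Hydra choosing exactly [m] evolutions, continues (the game is not ended by
   the Hydra dying): (1/2)^m if the grandparent exists, 1 otherwise. *)
Definition outcome_prob (path : seq nat) (m : nat) : rat :=
  if 2 <= size path then (((2%:R : rat) ^+ m)^-1)%R else 1%R.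

(* If the
   grandparent exists, after m evolutions the capacity is N * 4^m and
   N * 4^m - 1 copies are grown; if it does not exist, the Hydra makes no
   evolution choice (m = 0) and nothing grows. *)
Definition one_round (N : nat) (H H' : hydra) : Prop :=
  exists (path : seq nat) (m : nat),
    (size path < 2 -> m = 0) /\
    (0 < outcome_prob path m)%R /\
    chop (N * 4 ^ m - 1) path H = Some H'.

(* [Cnf [:: e1; ...; en]] denotes w^e1 + ... + w^en; it is in normal form
   when every ei is and e1 >= ... >= en. *)
Inductive cnf := Cnf of seq cnf.

Fixpoint cnf_cmp (a b : cnf) : comparison :=
  let: Cnf xs := a in
  let: Cnf ys := b in
  (fix lex (xs ys : seq cnf) : comparison :=
     match xs, ys with
     | [::], [::] => Eq
     | [::], _ :: _ => Lt
     | _ :: _, [::] => Gt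
     | x :: xs', y :: ys' =>
         match cnf_cmp x y with
         | Eq => lex xs' ys'
         | c => c
         end
     end) xs ys.

Definition ord_lt (a b : cnf) : bool := if cnf_cmp a b is Lt then true else false.
Definition ord_le (a b : cnf) : bool := if cnf_cmp a b is Gt then false else true.
Definition ord_ge (a b : cnf) : bool := ord_le b a.

Fixpoint cnf_wf (a : cnf) : bool :=
  let: Cnf xs := a in
  (fix all_wf (xs : seq cnf) : bool :=
     match xs with [::] => true | x :: xs' => cnf_wf x && all_wf xs' end) xs
  && sorted ord_ge xs.

Definition ord_zero : cnf := Cnf [::].
Definition omega_pow (e : cnf) : cnf := Cnf [:: e].
Definition ord_omega : cnf := omega_pow (omega_pow ord_zero).

(* Natural (Hessenberg) sum: merge of the exponent lists in descending order. *)
Definition nat_sum (a b : cnf) : cnf :=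
  let: Cnf xs := a in let: Cnf ys := b in Cnf (merge ord_ge xs ys).

Fixpoint T (h : hydra) : cnf :=
  let: Node cs := h in
  (fix go (cs : seq hydra) : cnf :=
     match cs with
     | [::] => ord_zero
     | c :: cs' => nat_sum (omega_pow (T c)) (go cs')
     end) cs.

(* Main.v *)
Require Import Defs.
From mathcomp Require Import all_boot all_order all_algebra.
From HB Require Import structures.
From mathcomp Require Import zify.
Set Implicit Arguments. Unset Strict Implicit. Unset Printing Implicit Defensive.
Import GRing.Theory Num.Theory.


Fixpoint lexc (xs ys : seq cnf) : comparison :=
  match xs, ys with
  | [::], [::] => Eq
  | [::], _ :: _ => Lt
  | _ :: _, [::] => Gt
  | x :: xs', y :: ys' =>
      match cnf_cmp x y with Eq => lexc xs' ys' | c => c end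
  end.

Lemma cmp_unfold xs ys : cnf_cmp (Cnf xs) (Cnf ys) = lexc xs ys.
Proof. by []. Qed.

Fixpoint cnf_ind2 (P : cnf -> Prop)
  (IH : forall xs, foldr (fun x acc => P x /\ acc) True xs -> P (Cnf xs)) (a : cnf) {struct a} : P a :=
  let: Cnf xs := a in
  IH xs ((fix F (l : seq cnf) : foldr (fun x acc => P x /\ acc) True l :=
            match l as l0 return foldr (fun x acc => P x /\ acc) True l0 with
            | [::] => I | x :: l' => conj (cnf_ind2 IH x) (F l') end) xs).

Lemma cmp_refl a : cnf_cmp a a = Eq.
Proof.
elim/cnf_ind2: a => xs H; rewrite cmp_unfold.
by elim: xs H => //= x xs IH [-> H]; apply: IH.
Qed.

Lemma cmp_eq a b : cnf_cmp a b = Eq -> a = b.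
Proof.
elim/cnf_ind2: a b => xs H [ys]; rewrite cmp_unfold.
elim: xs ys H => [|x xs IH] [|y ys] //= [Px H].
case E: (cnf_cmp x y) => // /(IH _ H) [->].
by rewrite (Px _ E).
Qed.

Lemma cmp_sym a b : cnf_cmp b a = CompOpp (cnf_cmp a b).
Proof.
elim/cnf_ind2: a b => xs H [ys]; rewrite !cmp_unfold.
elim: xs ys H => [|x xs IH] [|y ys] //= [Px H].
rewrite Px; case: (cnf_cmp x y) => //=; exact: IH.
Qed.

Lemma cmp_trans a b c : cnf_cmp a b = Lt -> cnf_cmp b c = Lt -> cnf_cmp a c = Lt.
Proof.
elim/cnf_ind2: a b c => xs H [ys] [zs]; rewrite !cmp_unfold.
elim: xs ys zs H => [|x xs IH] [|y ys] [|z zs] //= [Px H].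
case Exy: (cnf_cmp x y) => //; case Eyz: (cnf_cmp y z) => //.
- move: Exy Eyz => /cmp_eq <- /cmp_eq <-; rewrite cmp_refl; exact: IH.
- by move: Exy => /cmp_eq ->; rewrite Eyz.
- by move: Eyz => /cmp_eq <-; rewrite Exy.
- by rewrite (Px _ _ Exy Eyz).
Qed.

Definition cnf_eqb a b := if cnf_cmp a b is Eq then true else false.
Lemma cnf_eqP : Equality.axiom cnf_eqb.
Proof.
move=> a b; rewrite /cnf_eqb; case E: (cnf_cmp a b); constructor.
- exact: cmp_eq.
- by move=> Eab; rewrite Eab cmp_refl in E.
- by move=> Eab; rewrite Eab cmp_refl in E.
Qed.
HB.instance Definition _ := hasDecEq.Build cnf cnf_eqP.

Lemma le_trans' a b c : cnf_cmp a b <> Gt -> cnf_cmp b c <> Gt -> cnf_cmp a c <> Gt.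
Proof.
case Eab: (cnf_cmp a b) => //; case Ebc: (cnf_cmp b c) => // _ _.
- by move: Eab Ebc => /cmp_eq -> /cmp_eq ->; rewrite cmp_refl.
- by move: Eab => /cmp_eq ->; rewrite Ebc.
- by move: Ebc => /cmp_eq <-; rewrite Eab.
- by rewrite (cmp_trans Eab Ebc).
Qed.

Lemma ge_total : total ord_ge.
Proof.
move=> a b; rewrite /ord_ge /ord_le (cmp_sym a b).
by case: (cnf_cmp a b).
Qed.

Lemma ge_trans : transitive ord_ge.
Proof.
move=> y x z; rewrite /ord_ge /ord_le => H1 H2.
have H := @le_trans' z y x.
move: H1 H2 H; case: (cnf_cmp z y); case: (cnf_cmp y x); case: (cnf_cmp z x) => //= _ _ H;
by exfalso; apply: H.
Qed.

Lemma ge_anti : antisymmetric ord_ge.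
Proof.
move=> a b; rewrite /ord_ge /ord_le (cmp_sym a b).
case E: (cnf_cmp a b) => //= _; exact: cmp_eq.
Qed.

Definition Lcs (cs : seq hydra) : seq cnf :=
  foldr (fun c acc => merge ord_ge [:: T c] acc) [::] cs.

Lemma T_cons c cs : T (Node (c :: cs)) = nat_sum (omega_pow (T c)) (T (Node cs)).
Proof. by []. Qed.

Lemma T_Lcs cs : T (Node cs) = Cnf (Lcs cs).
Proof. elim: cs => // c cs IH; by rewrite T_cons IH. Qed.

Lemma Lcs_sorted cs : sorted ord_ge (Lcs cs).
Proof. by elim: cs => //= c cs IH; apply: merge_sorted => //; apply: ge_total. Qed.

Lemma Lcs_perm cs : perm_eq (Lcs cs) (map T cs).
Proof.
elim: cs => //= c cs IH; rewrite (perm_merge _ _ _ _).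
by rewrite cat1s perm_cons.
Qed.

Lemma T_eq cs s : sorted ord_ge s -> perm_eq s (map T cs) -> T (Node cs) = Cnf s.
Proof.
move=> Ss Ps; rewrite T_Lcs; congr Cnf.
apply: (sorted_eq ge_trans ge_anti (Lcs_sorted cs) Ss).
by rewrite (permPl (Lcs_perm cs)) perm_sym.
Qed.

Lemma lex_cat pre xs ys : lexc (pre ++ xs) (pre ++ ys) = lexc xs ys.
Proof. by elim: pre => //= p pre ->; rewrite cmp_refl. Qed.

Lemma lex_prefix s x l : lexc s (s ++ x :: l) = Lt.
Proof. by rewrite -{1}(cats0 s) lex_cat. Qed.

Lemma cmp0 z : cnf_cmp ord_zero z <> Gt.
Proof. by case: z => [[|]]. Qed.

Lemma lex_succ t zs : lexc t zs = Lt -> lexc (rcons t ord_zero) zs <> Gt.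
Proof.
elim: t zs => [|x t IH] [|z zs] //=.
- by move=> _; case: z => [[|? ?]]; case: zs.
- case: (cnf_cmp x z) => //; exact: IH.
Qed.

Lemma lex_split zs pre e : lexc zs (rcons pre e) = Lt ->
  (forall x l, lexc zs (pre ++ x :: l) = Lt) \/
  exists z rest, zs = pre ++ z :: rest /\ cnf_cmp z e = Lt.
Proof.
elim: pre zs => [|p pre IH] [|z zs] //=.
- by move=> _; left.
- case E: (cnf_cmp z e) => //.
  + by case: zs.
  + by move=> _; right; exists z, zs.
- by move=> _; left.
- case E: (cnf_cmp z p) => //.
  + move: E => /cmp_eq -> /IH [H|[z' [rest [-> H]]]].
    * by left => x l /=; rewrite ?cmp_refl ?H.
    * by right; exists z', rest.
  + by move=> _; left => x l /=; rewrite ?E.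
Qed.

Lemma lex_nseq rest x n : path ord_ge x rest -> size rest < n -> lexc rest (nseq n x) = Lt.
Proof.
elim: rest x n => [|r rest IH] x [|n] //= /andP [Hxr Hp] Hs.
move: Hxr; rewrite /ord_ge /ord_le.
case E: (cnf_cmp r x) => // _.
by move: E => /cmp_eq Erx; subst r; apply: IH.
Qed.

Lemma wf_inv zs : cnf_wf (Cnf zs) = all cnf_wf zs && sorted ord_ge zs.
Proof. rewrite /=; congr (_ && _); by elim: zs => //= z zs ->. Qed.

Lemma sorted_mid (r : rel cnf) pre x rest : sorted r (pre ++ x :: rest) -> path r x rest.
Proof. by move/cat_sorted2 => [_]. Qed.

Lemma sorted_ext pre e x l : sorted ord_ge (rcons pre e) -> ord_ge e x ->
  sorted ord_ge (x :: l) -> sorted ord_ge (pre ++ x :: l).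
Proof.
case: pre => [|p pre] //= H1 H2 H3.
rewrite cat_path /= H3 andbT.
move: H1; rewrite rcons_path => /andP [-> H1] /=.
exact: ge_trans H1 H2.
Qed.

Lemma sorted_nseq x n : sorted ord_ge (nseq n x).
Proof.
case: n => //= n; elim: n => //= n ->; rewrite andbT /ord_ge /ord_le cmp_refl //.
Qed.

Fixpoint hydra_ind2 (P : hydra -> Prop)
  (IH : forall cs, foldr (fun x acc => P x /\ acc) True cs -> P (Node cs)) (a : hydra) {struct a} : P a :=
  let: Node xs := a in
  IH xs ((fix F (l : seq hydra) : foldr (fun x acc => P x /\ acc) True l :=
            match l as l0 return foldr (fun x acc => P x /\ acc) True l0 with
            | [::] => I | x :: l' => conj (hydra_ind2 IH x) (F l') end) xs).

Lemma foldr_mid (P : hydra -> Prop) A c B :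
  foldr (fun x acc => P x /\ acc) True (A ++ c :: B) -> P c.
Proof. by elim: A => [[]|a A IH [_ /IH]]. Qed.

Lemma set_nth_mid (A B : seq hydra) c y : set_nth leaf (A ++ c :: B) (size A) y = A ++ y :: B.
Proof. by elim: A => //= a A ->. Qed.

Lemma nth_mid (A B : seq hydra) c : nth leaf (A ++ c :: B) (size A) = c.
Proof. by elim: A. Qed.

Lemma rem_mid (A B : seq hydra) c : rem_at (size A) (A ++ c :: B) = A ++ B.
Proof.
rewrite /rem_at take_size_cat // drop_cat ltnNge leqnSn /= subSn // subnn /=.
by rewrite drop0.
Qed.

Lemma chop1 k A B : chop k [:: size A] (Node (A ++ leaf :: B)) = Some (Node (A ++ B)).
Proof.
rewrite /chop nth_mid rem_mid size_cat /=.
have -> : size A < size A + (size B).+1 by lia.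
by [].
Qed.

Lemma chop2 k A D1 D2 B :
  chop k [:: size A; size D1] (Node (A ++ Node (D1 ++ leaf :: D2) :: B)) =
  Some (Node ((A ++ Node (D1 ++ D2) :: B) ++ nseq k (Node (D1 ++ D2)))).
Proof.
rewrite /chop nth_mid nth_mid rem_mid set_nth_mid !size_cat /=.
have -> : size A < size A + (size B).+1 by lia.
have -> : size D1 < size D1 + (size D2).+1 by lia.
by [].
Qed.

Lemma chopR k p c c' A B : 1 < size p -> chop k p c = Some c' ->
  chop k (size A :: p) (Node (A ++ c :: B)) = Some (Node (A ++ c' :: B)).
Proof.
case: p => [|j [|l r]] //= _ H.
rewrite nth_mid H set_nth_mid size_cat /=.
have -> : size A < size A + (size B).+1 by lia.
by [].
Qed.

Lemma perm_mid (pre l1 l2 : seq cnf) e :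
  perm_eq (rcons pre e) (l1 ++ e :: l2) -> perm_eq pre (l1 ++ l2).
Proof.
rewrite perm_rcons perm_sym -cat1s perm_catCA cat1s perm_cons perm_sym.
by [].
Qed.

Lemma perm_mid2 (pre l1 l2 ex : seq cnf) x :
  perm_eq pre (l1 ++ l2) -> perm_eq (pre ++ x :: ex) ((l1 ++ x :: l2) ++ ex).
Proof.
move/permP=> H; apply/permP => a; rewrite !count_cat /= H count_cat.
move: (count a l1) (count a l2) (nat_of_bool (a x)) (count a ex) => p q r s; lia.
Qed.

Lemma lex_cons x xs y ys :
  lexc (x :: xs) (y :: ys) = match cnf_cmp x y with Eq => lexc xs ys | c => c end.
Proof. by []. Qed.

Lemma decomp (s : seq hydra) i : i < size s ->
  s = take i s ++ nth leaf s i :: drop i.+1 s.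
Proof. by move=> H; rewrite -drop_nth // cat_take_drop. Qed.

Lemma sorted_rcons0 t : sorted ord_ge t -> sorted ord_ge (rcons t ord_zero).
Proof.
case: t => //= y t H; rewrite rcons_path H /= /ord_ge /ord_le.
by case: (last y t) => [[|]].
Qed.

Lemma is_leafE h : is_leaf h -> h = leaf.
Proof. by case: h => [[|]]. Qed.

Definition reach N v v' := exists p m, 1 < size p /\ chop (N * 4 ^ m - 1) p v = Some v'.

Lemma big_enough N r : 0 < N -> r < N * 4 ^ r.+1 - 1.
Proof.
move=> HN; have h1 : r.+1 < 4 ^ r.+1 by apply: ltn_expl.
have h2 : 4 ^ r.+1 <= N * 4 ^ r.+1 by rewrite leq_pmull.
lia.
Qed.

Lemma lim_lemma N (HN : 0 < N) v : forall cs, v = Node cs -> 0 < size cs ->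
  all (fun c => ~~ is_leaf c) cs ->
  exists vs : nat -> hydra, (forall n, reach N v (vs n)) /\
    (forall n, cnf_cmp (T (vs n)) (T v) = Lt) /\
    (forall z, cnf_wf z -> cnf_cmp z (T v) = Lt -> exists n, cnf_cmp z (T (vs n)) = Lt).
Proof.
elim/hydra_ind2: v => cs0 IHall cs [Ecs] cs_ne cs_int; subst cs0.
have Ss := Lcs_sorted cs; have Ps := Lcs_perm cs.
have [pre [e Es]] : exists pre e, Lcs cs = rcons pre e.
  case E: (Lcs cs) => [|x s'].
  - by move: (perm_size Ps) cs_ne; rewrite E size_map => <-.
  - by exists (belast x s'), (last x s'); rewrite -lastI.
rewrite Es in Ss Ps.
have [A [c [B [Ecs Tc]]]] : exists A c B, cs = A ++ c :: B /\ T c = e.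
  have He : e \in map T cs by rewrite -(perm_mem Ps) mem_rcons mem_head.
  have Hi : index e (map T cs) < size cs by rewrite -(size_map T) index_mem.
  exists (take (index e (map T cs)) cs), (nth leaf cs (index e (map T cs))),
         (drop (index e (map T cs)).+1 cs); split; first exact: decomp.
  by rewrite -(nth_map leaf (T leaf)) // nth_index.
subst cs.
have Ppre : perm_eq pre (map T A ++ map T B).
  by move: Ps; rewrite map_cat /= Tc => /perm_mid.
have IHc := foldr_mid IHall.
have TH : T (Node (A ++ c :: B)) = Cnf (rcons pre e) by rewrite T_Lcs Es.
rewrite TH.
have c_int : ~~ is_leaf c by move: cs_int; rewrite all_cat /= => /and3P [].
clear cs_int cs_ne Es Ps; case: c c_int IHc Tc IHall TH => ds c_int IHc Tc IHall TH.
have [hl|nhl] := boolP (has is_leaf ds).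
-
  set j := find is_leaf ds.
  have Hj : j < size ds by rewrite -has_find.
  have Hd := decomp Hj.
  have Hl : nth leaf ds j = leaf by apply: is_leafE; apply: nth_find.
  move: Hd; rewrite Hl; set D1 := take j ds; set D2 := drop j.+1 ds => Hd.
  have HD1 : size D1 = j by rewrite size_takel // ltnW.
  set t := Lcs (D1 ++ D2).
  have Te : e = Cnf (rcons t ord_zero).
    rewrite -Tc Hd; apply: T_eq; first exact/sorted_rcons0/Lcs_sorted.
    rewrite map_cat /= -cats1 -(cats0 (map T D1 ++ _)) .
    by apply: perm_mid2; rewrite -map_cat; apply: Lcs_perm.
  set e' := Cnf t.
  have Te' : T (Node (D1 ++ D2)) = e' by rewrite T_Lcs.
  have He'e : cnf_cmp e' e = Lt by rewrite Te cmp_unfold -cats1 lex_prefix.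
  pose k n := N * 4 ^ n - 1.
  exists (fun n => Node ((A ++ Node (D1 ++ D2) :: B) ++ nseq (k n) (Node (D1 ++ D2)))).
  have Tv : forall n, T (Node ((A ++ Node (D1 ++ D2) :: B) ++ nseq (k n) (Node (D1 ++ D2))))
                      = Cnf (pre ++ e' :: nseq (k n) e').
    move=> n; apply: T_eq.
    + apply: sorted_ext Ss _ _; last exact: (@sorted_nseq e' (k n).+1).
      by rewrite /ord_ge /ord_le He'e.
    + have mc : forall (x : hydra) l, map T (x :: l) = T x :: map T l by [].
      by rewrite map_cat map_cat mc map_nseq Te'; apply: perm_mid2.
  split; last split.
  + move=> n; exists [:: size A; size D1], n; split => //.
    by rewrite Hd chop2.
  + by move=> n; rewrite Tv cmp_unfold -cats1 lex_cat lex_cons He'e.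
  + case=> zs wf_zs; rewrite cmp_unfold => /lex_split [H|[z1 [rest [Ezs Hz1]]]].
    * by exists 0; rewrite Tv cmp_unfold H.
    * case E: (cnf_cmp z1 e').
      - have Ez1 := cmp_eq E; subst z1.
        exists (size rest).+1; rewrite Tv cmp_unfold Ezs lex_cat lex_cons cmp_refl.
        apply: lex_nseq; last exact: big_enough.
        by move: wf_zs; rewrite wf_inv Ezs => /andP [_ /sorted_mid].
      - by exists 0; rewrite Tv cmp_unfold Ezs lex_cat lex_cons E.
      - exfalso; move: E Hz1; case: z1 {Ezs} => u; rewrite Te !cmp_unfold.
        move=> E Hu; have E' : lexc t u = Lt by rewrite -cmp_unfold cmp_sym cmp_unfold E.
        have := lex_succ E'; rewrite -!cmp_unfold cmp_sym !cmp_unfold Hu //.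
-
  have ds_ne : 0 < size ds by move: c_int; case: (ds).
  have ds_int : all (fun c => ~~ is_leaf c) ds by rewrite all_predC.
  have [vsc [Rc [Lc Cc]]] := IHc ds erefl ds_ne ds_int.
  rewrite Tc in Lc Cc.
  exists (fun n => Node (A ++ vsc n :: B)).
  have Tv : forall n, T (Node (A ++ vsc n :: B)) = Cnf (rcons pre (T (vsc n))).
    move=> n; apply: T_eq.
    + rewrite -cats1; apply: sorted_ext Ss _ _ => //.
      by rewrite /ord_ge /ord_le Lc.
    + by rewrite -cats1 -(cats0 (map T _)) map_cat /=; apply: perm_mid2.
  split; last split.
  + move=> n; have [p [m [Hp Hc]]] := Rc n.
    by exists (size A :: p), m; split; [rewrite /= ltnW | apply: chopR].
  + by move=> n; rewrite Tv cmp_unfold -!cats1 lex_cat lex_cons Lc.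
  + case=> zs wf_zs; rewrite cmp_unfold => /lex_split [H|[z1 [rest [Ezs Hz1]]]].
    * by exists 0; rewrite Tv cmp_unfold -cats1 H.
    * have wz1 : cnf_wf z1.
        move: wf_zs; rewrite wf_inv Ezs => /andP [/allP Hall _].
        by apply: Hall; rewrite mem_cat mem_head orbT.
      have [n Hn] := Cc z1 wz1 Hz1.
      by exists n; rewrite Tv cmp_unfold Ezs -cats1 lex_cat lex_cons Hn.
Qed.
Unset Implicit Arguments.

Theorem lemma2p2 (H : hydra) (N : nat) :
  (0 < N)%N ->
  ord_le ord_omega (T H) ->
  exists Hs : nat -> hydra,
    (forall i, one_round N H (Hs i)) /\
    (forall i, ord_lt (T (Hs i)) (T H)) /\
    (forall b, cnf_wf b -> (forall i, ord_lt (T (Hs i)) b) -> ord_le (T H) b).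
Proof.
move=> HN; case: H => cs Hom.
have [hl|nhl] := boolP (has is_leaf cs).
- set j := find is_leaf cs.
  have Hj : (j < size cs)%N by rewrite -has_find.
  have Hd := decomp Hj.
  have Hl : nth leaf cs j = leaf by apply: is_leafE; apply: nth_find.
  move: Hd; rewrite Hl; set A := take j cs; set B := drop j.+1 cs => Hd.
  have HA : size A = j by rewrite size_takel // ltnW.
  rewrite Hd; clear Hom.
  set t := Lcs (A ++ B).
  have TH : T (Node (A ++ leaf :: B)) = Cnf (rcons t ord_zero).
    apply: T_eq; first exact/sorted_rcons0/Lcs_sorted.
    rewrite map_cat /= -cats1 -(cats0 (map T A ++ _)).
    by apply: perm_mid2; rewrite -map_cat; apply: Lcs_perm.
  exists (fun _ => Node (A ++ B)); rewrite TH T_Lcs -/t.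
  split; last split.
  + move=> i; exists [:: size A], 0%N; split => //; split.
      by rewrite /outcome_prob /= ltr01.
    by rewrite chop1.
  + by move=> i; rewrite /ord_lt cmp_unfold -cats1 lex_prefix.
  + case=> zs _ /(_ 0%N); rewrite /ord_lt /ord_le !cmp_unfold.
    case E: (lexc t zs) => // _.
    by have := lex_succ E; case: (lexc (rcons t ord_zero) zs).
- have cs_ne : (0 < size cs)%N by move: Hom; case: (cs).
  have cs_int : all (fun c => ~~ is_leaf c) cs by rewrite all_predC.
  have [vs [R [L C]]] := lim_lemma HN erefl cs_ne cs_int.
  exists vs; split; last split.
  + move=> i; have [p [m [Hp Hc]]] := R i.
    exists p, m; split; first by move=> /ltn_geF; rewrite Hp.
    split => //.
    by rewrite /outcome_prob Hp invr_gt0 exprn_gt0 // ltr0n.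
  + by move=> i; rewrite /ord_lt L.
  + move=> b wb Hb; rewrite /ord_le.
    case E: (cnf_cmp (T (Node cs)) b) => //.
    have E' : cnf_cmp b (T (Node cs)) = Lt by rewrite cmp_sym E.
    have [n Hn] := C b wb E'.
    by move: (Hb n); rewrite /ord_lt cmp_sym Hn.
Qed.
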